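(* Let $\mathbb K$ be a field with $2\in\mathbb K^\times$, $A$ a unital commutative associative $\mathbb K$-algebra, $\mathfrak k$ a $\mathbb K$-Lie algebra, $\mathfrak g=A\otimes\mathfrak k$ and $\mathfrak z$ a vector space. A linear map $f=f_1\circ p_1+f_2\circ p_2+f_3\circ p_3:\Lambda^2(\mathfrak g)\to\mathfrak z$ is a 2-cocycle if and only if both $f_1\circ p_1+f_2\circ p_2$ and $f_3\circ p_3$ are 2-cocycles.
   Context: $\mathfrak g$ has bracket $[a\otimes x,a'\otimes x']=aa'\otimes[x,x']$, $ax=a\otimes x$, unit $\mathbf 1$. $v\wedge w=\tfrac12(v\otimes w-w\otimes v)$, $v\vee w=\tfrac12(v\otimes w+w\otimes v)$. $I_A$ is the kernel of multiplication $S^2(A)\to A$. $p_1(ax\wedge by)=a\wedge b\otimes x\vee y\in\Lambda^2(A)\otimes S^2(\mathfrak k)$, $p_2(ax\wedge by)=ab\otimes x\wedge y\in A\otimes\Lambda^2(\mathfrak k)$, $p_3(ax\wedge by)=(a\vee b-ab\vee\mathbf 1)\otimes x\wedge y\in I_A\otimes\Lambda^2(\mathfrak k)$; together they form a linear isomorphism of $\Lambda^2(\mathfrak g)$ onto the direct sum, and $f_1,f_2,f_3$ are arbitrary linear maps on these three spaces. A 2-cocycle is a linear map on $\Lambda^2(\mathfrak g)$ vanishing on the span of $[u,v]\wedge w+[v,w]\wedge u+[w,u]\wedge v$, $u,v,w\in\mathfrak g$. *)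

(* Defs.v *)
From HB Require Import structures.
From mathcomp Require Import all_boot all_algebra.
Set Implicit Arguments. Unset Strict Implicit. Unset Printing Implicit Defensive.
Import GRing.Theory.
Local Open Scope ring_scope.

Definition islinear (K : fieldType) (U V : lmodType K) (f : U -> V) : Prop :=
  forall (c : K) (u v : U), f (c *: u + v) = c *: f u + f v.

Definition bilinear_map (K : fieldType) (U1 U2 V : lmodType K)
  (f : U1 -> U2 -> V) : Prop :=
  (forall u2, islinear (fun u1 => f u1 u2)) /\ (forall u1, islinear (f u1)).

Definition trilinear_map (K : fieldType) (U1 U2 U3 V : lmodType K)
  (f : U1 -> U2 -> U3 -> V) : Prop :=
  [/\ (forall u2 u3, islinear (fun u1 => f u1 u2 u3)),
      (forall u1 u3, islinear (fun u2 => f u1 u2 u3)) &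
      (forall u1 u2, islinear (f u1 u2))].

Definition quadrilinear_map (K : fieldType) (U1 U2 U3 U4 V : lmodType K)
  (f : U1 -> U2 -> U3 -> U4 -> V) : Prop :=
  [/\ (forall u2 u3 u4, islinear (fun u1 => f u1 u2 u3 u4)),
      (forall u1 u3 u4, islinear (fun u2 => f u1 u2 u3 u4)),
      (forall u1 u2 u4, islinear (fun u3 => f u1 u2 u3 u4)) &
      (forall u1 u2 u3, islinear (f u1 u2 u3))].

Definition is_Lie_bracket (K : fieldType) (L : lmodType K) (br : L -> L -> L) : Prop :=
  [/\ bilinear_map br, (forall x, br x x = 0) &
      (forall x y w, br x (br y w) + br y (br w x) + br w (br x y) = 0)].

(* (g, iota) is a tensor product A (x) k : iota is bilinear, pure tensors
   span g, and every bilinear map out of A x k factors linearly through iota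
   (existence + spanning = the universal property). *)
Definition is_tensor_product (K : fieldType) (A kT g : lmodType K)
  (iota : A -> kT -> g) : Prop :=
  [/\ bilinear_map iota,
      (forall u : g, exists s : seq (A * kT), u = \sum_(p <- s) iota p.1 p.2) &
      (forall (W : lmodType K) (phi : A -> kT -> W), bilinear_map phi ->
         exists psi : g -> W, islinear psi /\ forall a x, psi (iota a x) = phi a x)].

Definition is_current_bracket (K : fieldType) (A : comAlgType K) (kT g : lmodType K)
  (brk : kT -> kT -> kT) (iota : A -> kT -> g) (brg : g -> g -> g) : Prop :=
  bilinear_map brg /\
  forall a a' x x', brg (iota a x) (iota a' x') = iota (a * a') (brk x x').

(* linear maps on Lambda^2(A) (x) S^2(k), as multilinear maps
   G(a,b,x,y) = f(a/\b (x) x\/y) *)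
Definition L2S2_form (K : fieldType) (A kT z : lmodType K)
  (G : A -> A -> kT -> kT -> z) : Prop :=
  [/\ quadrilinear_map G, (forall a b x y, G b a x y = - G a b x y) &
      (forall a b x y, G a b y x = G a b x y)].

(* linear maps on A (x) Lambda^2(k) : G(c,x,y) = f(c (x) x/\y) *)
Definition AL2_form (K : fieldType) (A kT z : lmodType K)
  (G : A -> kT -> kT -> z) : Prop :=
  trilinear_map G /\ (forall c x y, G c y x = - G c x y).

(* linear maps on S^2(A) (x) Lambda^2(k) : G(a,b,x,y) = F(a\/b (x) x/\y);
   f3 on I_A (x) Lambda^2(k) is the restriction of such an F. *)
Definition S2L2_form (K : fieldType) (A kT z : lmodType K)
  (G : A -> A -> kT -> kT -> z) : Prop :=
  [/\ quadrilinear_map G, (forall a b x y, G b a x y = G a b x y) &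
      (forall a b x y, G a b y x = - G a b x y)].

(* a linear map f on Lambda^2(g), given as the alternating bilinear map
   B(u,v) = f(u/\v), is a 2-cocycle *)
Definition cocycle2 (K : fieldType) (g z : lmodType K) (brg : g -> g -> g)
  (B : g -> g -> z) : Prop :=
  forall u v w, B (brg u v) w + B (brg v w) u + B (brg w u) v = 0.

(* Main.v *)
Require Import Defs.
From HB Require Import structures.
From mathcomp Require Import all_boot all_algebra.
Import GRing.Theory.
Local Open Scope ring_scope.
Set Implicit Arguments. Unset Strict Implicit.

Lemma lin0 (K : fieldType) (U V : lmodType K) (f : U -> V) : islinear f -> f 0 = 0.
Proof.
move=> hf; have := hf 1 0 0; rewrite !scale1r addr0 => /eqP.
by rewrite -subr_eq0 opprD addrA subrr add0r oppr_eq0 => /eqP.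
Qed.

Lemma linD (K : fieldType) (U V : lmodType K) (f : U -> V) u v :
  islinear f -> f (u + v) = f u + f v.
Proof. by move=> hf; have := hf 1 u v; rewrite !scale1r. Qed.

Lemma linsum (K : fieldType) (U V : lmodType K) (f : U -> V) (T : Type)
  (s : seq T) (F : T -> U) :
  islinear f -> f (\sum_(p <- s) F p) = \sum_(p <- s) f (F p).
Proof.
move=> hf; elim: s => [|p s IH]; first by rewrite !big_nil lin0.
by rewrite !big_cons linD // IH.
Qed.

Lemma lin_comp (K : fieldType) (U V W : lmodType K) (f : U -> V) (g : V -> W) :
  islinear f -> islinear g -> islinear (fun u => g (f u)).
Proof. by move=> hf hg c u v; rewrite hf hg. Qed.

Lemma span_zero (K : fieldType) (A kT g W : lmodType K) (iota : A -> kT -> g)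
  (f : g -> W) :
  is_tensor_product iota -> islinear f -> (forall a x, f (iota a x) = 0) ->
  forall u, f u = 0.
Proof.
case=> _ hspan _ hf h u; have [s ->] := hspan u.
by rewrite linsum //; apply: big1 => p _; exact: h.
Qed.

Lemma two_zero (K : fieldType) (V : lmodType K) (v : V) :
  (2 : K) != 0 -> v *+ 2 = 0 -> v = 0.
Proof.
move=> h2; rewrite -scaler_nat => /(congr1 (fun u => (2 : K)^-1 *: u)).
by rewrite scalerA mulVf // scale1r scaler0.
Qed.

Lemma zid1 (V : zmodType) (g1 g2 t h1 : V) :
  (g1 + g2 + t) + (- g1 + g2 + t) = t *+ 2 + ((h1 + g2) + (- h1 + g2)).
Proof.
rewrite mulr2n (AC (3*3)%AC ((1*4)*((2*5)*(3*6)))%AC) /=.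
rewrite [h1 + g2 + _](AC (2*2)%AC ((1*3)*(2*4))%AC) /=.
by rewrite !subrr !add0r addrC.
Qed.

Lemma zid2 (V : zmodType) (p baQ abR abQ baR m1Q omQ m1R omR n1 n2 : V) :
  p + baQ + abR = 0 -> p + abQ + baR = 0 -> p + omQ + m1R = 0 ->
  p + m1Q + omR = 0 ->
  abQ + baQ = n1 + (m1Q + omQ) -> abR + baR = n2 + (m1R + omR) -> n1 + n2 = 0.
Proof.
move=> e1 e2 e3 e4 dQ dR.
have : (p + baQ + abR) + (p + abQ + baR) = 0 by rewrite e1 e2 addr0.
rewrite (AC (3*3)%AC ((1*4)*((5*2)*(3*6)))%AC) /= dQ dR.
rewrite (AC (2*((1*2)*(1*2)))%AC ((3*6)*((1*5*7)*(2*4*8)))%AC) /=.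
by rewrite e3 e4 !addr0.
Qed.

Theorem corollary3p2 (K : fieldType) (A : comAlgType K) (kT : lmodType K)
  (brk : kT -> kT -> kT) (g : lmodType K) (iota : A -> kT -> g)
  (brg : g -> g -> g) (z : lmodType K)
  (G1 : A -> A -> kT -> kT -> z) (G2 : A -> kT -> kT -> z)
  (G3 : A -> A -> kT -> kT -> z) (B12 B3 : g -> g -> z) :
  (2 : K) != 0 ->
  is_Lie_bracket brk ->
  is_tensor_product iota ->
  is_current_bracket brk iota brg ->
  L2S2_form G1 -> AL2_form G2 -> S2L2_form G3 ->
  bilinear_map B12 -> bilinear_map B3 ->
  (forall a b x y, B12 (iota a x) (iota b y) = G1 a b x y + G2 (a * b) x y) ->
  (forall a b x y, B3 (iota a x) (iota b y) = G3 a b x y - G3 (a * b) 1 x y) ->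
  (cocycle2 brg (fun u v => B12 u v + B3 u v) <->
   cocycle2 brg B12 /\ cocycle2 brg B3).
Proof.
move=> h2 _ Htens [Hbrg Hbr] [_ G1anti _] _ [_ G3sym _] _ [B3l B3r] HB12 HB3.
pose SB a b X Y := B12 (iota a X) (iota b Y) + B3 (iota a X) (iota b Y).
have Dsym : forall a b X Y, SB a b X Y + SB b a X Y =
    B3 (iota a X) (iota b Y) *+ 2 + (SB (a * b) 1 X Y + SB 1 (a * b) X Y).
  move=> a b X Y; rewrite /SB !HB12 !HB3 (G1anti a b) (G1anti (a * b) 1).
  rewrite (G3sym a b) (G3sym (a * b) 1) [b * a]mulrC !mulr1 !mul1r.
  rewrite subrr !addr0; exact: zid1.
split; last first.
  move=> [c12 c3] u v w /=.
  rewrite (AC (2*2*2)%AC ((1*3*5)*(2*4*6))%AC) /= c12 c3 addr0 //.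
move=> Hc.
have hyp : forall a b c x y w, SB (a * b) c (brk x y) w + SB (b * c) a (brk y w) x
    + SB (c * a) b (brk w x) y = 0.
  move=> a b c x y w; have := Hc (iota a x) (iota b y) (iota c w).
  by rewrite /= !Hbr.
have comb : forall a b x y w,
    B3 (iota a (brk y w)) (iota b x) + B3 (iota a (brk w x)) (iota b y) = 0.
  move=> a b x y w; apply: two_zero => //; rewrite mulrnDl.
  have k1 := hyp a b 1 x y w; rewrite !mulr1 !mul1r in k1.
  have k2 := hyp b a 1 x y w; rewrite !mulr1 !mul1r [b * a]mulrC in k2.
  have k3 := hyp (a * b) 1 1 x y w; rewrite !mulr1 !mul1r in k3.
  have k4 := hyp 1 (a * b) 1 x y w; rewrite !mulr1 !mul1r in k4.

  exact: (zid2 k1 k2 k3 k4 (Dsym a b (brk y w) x) (Dsym a b (brk w x) y)).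
have N0 : forall p q x y w, B3 (iota p (brk x y)) (iota q w) = 0.
  move=> p q x y w.
  have e1 := comb p q w x y; have e2 := comb p q x y w; have e3 := comb p q y w x.
  move/eqP: e1; rewrite addr_eq0 => /eqP e1.
  move/eqP: e2; rewrite addr_eq0 => /eqP e2.
  move/eqP: e3; rewrite addr_eq0 => /eqP e3.
  apply: two_zero => //; rewrite mulr2n {2}e1 e2 opprK e3 subrr //.
have B30 : forall u v w, B3 (brg u v) w = 0.
  move=> u v w.
  apply: (span_zero (f := fun u => B3 (brg u v) w) Htens).
    exact: lin_comp (Hbrg.1 v) (B3l w).
  move=> a x.
  apply: (span_zero (f := fun v => B3 (brg (iota a x) v) w) Htens).
    exact: lin_comp (Hbrg.2 _) (B3l w).
  move=> b y.
  apply: (span_zero (f := fun w => B3 (brg (iota a x) (iota b y)) w) Htens).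
    exact: B3r.
  by move=> c t; rewrite Hbr N0.
split => u v w; last by rewrite !B30 !addr0.
have := Hc u v w; by rewrite /= !B30 !addr0.
Qed.
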